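(* Let $f\colon\mathbb{R}^2\to\mathbb{R}$, $f(x_1,x_3)=\frac14(x_3^2-1)$. There is a smooth family of functions $f_t^\delta\colon[-2,2]\times[-2,2]\to\mathbb{R}$, parametrised by $\delta\in(0,\frac1{10}]$ and $t\in[-1,1]$, with the following properties: (1) $f_{-1}^\delta=f$; (2) $f_t^\delta$ is independent of $t$ outside the square $[-1-2\delta,1+2\delta]\times[-1-2\delta,1+2\delta]$; (3) for $t<0$ the zero-set of $f_t^\delta$ consists of two arcs, homotopic to those of $f$ (namely the segments $\{x_3=1\}$ and $\{x_3=-1\}$); for $t=0$ the zero-set is a letter X (two arcs crossing transversally at a single point); and for $t>0$ it again consists of two arcs, connecting the endpoints the other way; moreover the vanishing is of order exactly $1$, except at the singular point when $t=0$, where it is quadratic; (4) $f_t^\delta$ is bounded in $C^1$, uniformly in $t$ and $\delta$. *)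

(* Defs.v *)
From Stdlib Require Import Reals List.
From Coquelicot Require Import Coquelicot.
Open Scope R_scope.

Definition f0 (x1 x3 : R) : R := / 4 * (x3 ^ 2 - 1).

Definition in_box (a x1 x3 : R) : Prop := -a <= x1 <= a /\ -a <= x3 <= a.

Definition partial3 (i : nat) (g : R -> R -> R -> R) : R -> R -> R -> R :=
  fun a b c =>
    match i with
    | O => Derive (fun s => g s b c) a
    | S O => Derive (fun s => g a s c) b
    | _ => Derive (fun s => g a b s) c
    end.

Fixpoint iter_partial3 (l : list nat) (g : R -> R -> R -> R) : R -> R -> R -> R :=
  match l with
  | nil => g
  | i :: l' => partial3 i (iter_partial3 l' g)
  end.

Definition cont3 (g : R -> R -> R -> R) : Prop :=
  forall a b c eps, 0 < eps -> exists d, 0 < d /\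
    forall a' b' c', Rabs (a' - a) < d -> Rabs (b' - b) < d -> Rabs (c' - c) < d ->
      Rabs (g a' b' c' - g a b c) < eps.

Definition smooth3 (g : R -> R -> R -> R) : Prop :=
  forall l : list nat,
    cont3 (iter_partial3 l g) /\
    forall a b c,
      ex_derive (fun s => iter_partial3 l g s b c) a /\
      ex_derive (fun s => iter_partial3 l g a s c) b /\
      ex_derive (fun s => iter_partial3 l g a b s) c.

Definition dx1 (g : R -> R -> R) (x1 x3 : R) : R := Derive (fun y => g y x3) x1.
Definition dx3 (g : R -> R -> R) (x1 x3 : R) : R := Derive (fun y => g x1 y) x3.

Definition order_one_at (g : R -> R -> R) (p : R * R) : Prop :=
  (dx1 g (fst p) (snd p), dx3 g (fst p) (snd p)) <> (0, 0).

Definition quadratic_at (g : R -> R -> R) (p : R * R) : Prop :=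
  dx1 g (fst p) (snd p) = 0 /\ dx3 g (fst p) (snd p) = 0 /\
  ~ (dx1 (dx1 g) (fst p) (snd p) = 0 /\ dx3 (dx1 g) (fst p) (snd p) = 0 /\
     dx1 (dx3 g) (fst p) (snd p) = 0 /\ dx3 (dx3 g) (fst p) (snd p) = 0).

Definition is_arc (gam : R -> R * R) : Prop :=
  (forall s, 0 <= s <= 1 ->
     continuous (fun r => fst (gam r)) s /\ continuous (fun r => snd (gam r)) s) /\
  (forall s s', 0 <= s <= 1 -> 0 <= s' <= 1 -> gam s = gam s' -> s = s').

Definition on_arc (gam : R -> R * R) (p : R * R) : Prop :=
  exists s, 0 <= s <= 1 /\ gam s = p.

Definition zero_set (g : R -> R -> R) (p : R * R) : Prop :=
  in_box 2 (fst p) (snd p) /\ g (fst p) (snd p) = 0.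

Definition two_disjoint_arcs (Z : R * R -> Prop) (a1 b1 a2 b2 : R * R) : Prop :=
  exists g1 g2 : R -> R * R,
    is_arc g1 /\ is_arc g2 /\
    g1 0 = a1 /\ g1 1 = b1 /\ g2 0 = a2 /\ g2 1 = b2 /\
    (forall p, ~ (on_arc g1 p /\ on_arc g2 p)) /\
    (forall p, Z p <-> on_arc g1 p \/ on_arc g2 p).

(** The set Z is a letter X: two arcs (from a1 to b1 and from a2 to b2)
    meeting in exactly one point c, interior to both, where both are
    differentiable with linearly independent velocity vectors
    (transversal crossing). *)
Definition letter_X (Z : R * R -> Prop) (a1 b1 a2 b2 c : R * R) : Prop :=
  exists (g1 g2 : R -> R * R) (s1 s2 : R),
    is_arc g1 /\ is_arc g2 /\
    g1 0 = a1 /\ g1 1 = b1 /\ g2 0 = a2 /\ g2 1 = b2 /\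
    0 < s1 < 1 /\ 0 < s2 < 1 /\ g1 s1 = c /\ g2 s2 = c /\
    (forall p, on_arc g1 p -> on_arc g2 p -> p = c) /\
    ex_derive (fun r => fst (g1 r)) s1 /\ ex_derive (fun r => snd (g1 r)) s1 /\
    ex_derive (fun r => fst (g2 r)) s2 /\ ex_derive (fun r => snd (g2 r)) s2 /\
    Derive (fun r => fst (g1 r)) s1 * Derive (fun r => snd (g2 r)) s2
      - Derive (fun r => snd (g1 r)) s1 * Derive (fun r => fst (g2 r)) s2 <> 0 /\
    (forall p, Z p <-> on_arc g1 p \/ on_arc g2 p).

(* Main.v *)
Require Import Defs.
From Stdlib Require Import Reals List.
From Coquelicot Require Import Coquelicot.
Open Scope R_scope.
From Stdlib Require Import Lra Lia FunctionalExtensionality.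

Lemma exp_nat_mul (k : nat) (a : R) : exp (INR k * a) = exp a ^ k.
Proof.
  induction k as [|k IH].
  - simpl. rewrite Rmult_0_l, exp_0; reflexivity.
  - rewrite S_INR, Rmult_plus_distr_r, Rmult_1_l, exp_plus, IH. simpl. ring.
Qed.

Lemma poly_exp_bound (k : nat) : exists D, 0 < D /\ forall y, 0 <= y -> (1 + y) ^ k <= D * exp y.
Proof.
  destruct k as [|k].
  - exists 1; split; [lra|]. intros y Hy. simpl. pose proof (exp_ineq1_le y). lra.
  - set (K := INR (S k)).
    assert (HK : 1 <= K) by (unfold K; rewrite S_INR; pose proof (pos_INR k); lra).
    exists (K ^ S k); split; [apply pow_lt; lra|].
    intros y Hy.
    replace (exp y) with (exp (y / K) ^ S k).
    2:{ rewrite <- exp_nat_mul. fold K. f_equal. field. lra. }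
    rewrite <- Rpow_mult_distr.
    apply pow_incr. split; [lra|].
    pose proof (exp_ineq1_le (y / K)).
    assert (1 + y <= K * (1 + y / K)).
    { replace (K * (1 + y / K)) with (K + y) by (field; lra). lra. }
    assert (0 <= 1 + y / K).
    { assert (0 <= y / K) by (apply Rdiv_le_0_compat; lra). lra. }
    eapply Rle_trans; [eassumption|]. apply Rmult_le_compat_l; lra.
Qed.

Inductive ispoly : (R -> R) -> Prop :=
| ip_const c : ispoly (fun _ => c)
| ip_id : ispoly (fun y => y)
| ip_plus f g : ispoly f -> ispoly g -> ispoly (fun y => f y + g y)
| ip_mult f g : ispoly f -> ispoly g -> ispoly (fun y => f y * g y).

Lemma ispoly_ext f g : ispoly f -> (forall y, f y = g y) -> ispoly g.
Proof.
  intros Hf Heq. assert (f = g) by (apply functional_extensionality; auto).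
  subst; auto.
Qed.

Lemma poly_deriv P : ispoly P -> exists P', ispoly P' /\ forall y, is_derive P y (P' y).
Proof.
  induction 1 as [c| |f g _ [f' [Hf' Df]] _ [g' [Hg' Dg]]|f g Hf [f' [Hf' Df]] Hg [g' [Hg' Dg]]].
  - exists (fun _ => 0); split; [constructor|]. intros; exact (is_derive_const c y).
  - exists (fun _ => 1); split; [constructor|]. intros; exact (is_derive_id y).
  - exists (fun y => f' y + g' y); split; [constructor; auto|].
    intros y; exact (is_derive_plus f g y _ _ (Df y) (Dg y)).
  - exists (fun y => f' y * g y + f y * g' y); split.
    + repeat constructor; auto.
    + intros y. exact (is_derive_mult f g y _ _ (Df y) (Dg y) (fun a b => Rmult_comm a b)).
Qed.

Lemma poly_bound P : ispoly P -> exists C n, 0 <= C /\ forall y, 0 <= y -> Rabs (P y) <= C * (1 + y) ^ n.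
Proof.
  induction 1 as [c| |f g _ [C1 [n1 [HC1 B1]]] _ [C2 [n2 [HC2 B2]]]|f g _ [C1 [n1 [HC1 B1]]] _ [C2 [n2 [HC2 B2]]]].
  - exists (Rabs c), 0%nat; split; [apply Rabs_pos|]. intros; simpl; lra.
  - exists 1, 1%nat; split; [lra|]. intros; simpl. rewrite Rabs_right; lra.
  - exists (C1 + C2), (n1 + n2)%nat; split; [lra|]. intros y Hy.
    assert (H1 : 1 <= (1 + y)^n1) by (apply pow_R1_Rle; lra).
    assert (H2 : 1 <= (1 + y)^n2) by (apply pow_R1_Rle; lra).
    rewrite pow_add.
    eapply Rle_trans; [apply Rabs_triang|].
    specialize (B1 y Hy); specialize (B2 y Hy).
    assert (C1 * (1 + y) ^ n1 <= C1 * ((1 + y) ^ n1 * (1 + y) ^ n2)).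
    { apply Rmult_le_compat_l; auto. rewrite <- (Rmult_1_r ((1+y)^n1)) at 1.
      apply Rmult_le_compat_l; lra. }
    assert (C2 * (1 + y) ^ n2 <= C2 * ((1 + y) ^ n1 * (1 + y) ^ n2)).
    { apply Rmult_le_compat_l; auto. rewrite <- (Rmult_1_l ((1+y)^n2)) at 1.
      apply Rmult_le_compat_r; lra. }
    lra.
  - exists (C1 * C2), (n1 + n2)%nat; split; [apply Rmult_le_pos; auto|]. intros y Hy.
    rewrite pow_add, Rabs_mult.
    replace (C1 * C2 * ((1 + y) ^ n1 * (1 + y) ^ n2)) with ((C1 * (1+y)^n1) * (C2 * (1+y)^n2)) by ring.
    apply Rmult_le_compat; auto using Rabs_pos.
Qed.

Definition gfun (P : R -> R) (x : R) : R :=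
  if Rlt_dec 0 x then P (/ x) * exp (- / x) else 0.

Lemma gfun_small P : ispoly P -> forall eps, 0 < eps -> exists eta, 0 < eta /\
  forall h, 0 < h < eta -> Rabs (P (/ h) * exp (- / h) / h) < eps.
Proof.
  intros HP eps Heps.
  destruct (poly_bound P HP) as [C [n [HC B]]].
  destruct (poly_exp_bound (S (S n))) as [D [HD BD]].
  exists (eps / (C * D + 1)); split.
  { apply Rdiv_lt_0_compat; auto. assert (0 <= C * D) by (apply Rmult_le_pos; lra). lra. }
  intros h [Hh Hhe].
  set (y := / h).
  assert (Hy : 0 < y) by (unfold y; apply Rinv_0_lt_compat; auto).
  assert (Hhy : h = / y) by (unfold y; rewrite Rinv_inv; auto).
  rewrite Hhy. unfold Rdiv. rewrite Rinv_inv.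
  rewrite !Rabs_mult. rewrite (Rabs_right (exp _)) by (left; apply exp_pos).
  rewrite (Rabs_right y) by lra.
  specialize (B y (Rlt_le _ _ Hy)). specialize (BD y (Rlt_le _ _ Hy)).
  assert (Hey : exp (- y) = / exp y) by apply exp_Ropp.
  rewrite Hey.
  assert (Hexp : 0 < exp y) by apply exp_pos.
  assert (Hp : 0 < (1 + y) ^ n) by (apply pow_lt; lra).
  (* |P y| * /exp y * y <= C (1+y)^n * y / exp y <= C (1+y)^(n+2) / ((1+y) exp y) <= C D / (1+y) *)
  assert (Step1 : Rabs (P y) * / exp y * y <= C * (1 + y) ^ n * y / exp y).
  { unfold Rdiv. assert (0 < / exp y) by (apply Rinv_0_lt_compat; auto).
    assert (0 < / exp y * y) by (apply Rmult_lt_0_compat; auto).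
    set (e := / exp y) in *. set (A := Rabs (P y)) in *. set (Cn := C * (1+y)^n) in *.
    replace (A * e * y) with (A * (e * y)) by ring.
    replace (Cn * y * e) with (Cn * (e * y)) by ring.
    apply Rmult_le_compat_r; lra. }
  assert (Step2 : C * (1 + y) ^ n * y / exp y <= C * D / y).
  { assert (E1: (1+y)^n * (y*y) <= (1+y)^(S(S n))).
    { simpl. assert (0 <= (1+y)^n * (1 + 2*y)) by (apply Rmult_le_pos; lra). nra. }
    assert (L: C*(1+y)^n*y/exp y * (y*exp y) = C*((1+y)^n*(y*y))) by (field; lra).
    assert (Rr: C*D/y*(y*exp y) = C*(D*exp y)) by (field; lra).
    apply Rmult_le_reg_r with (y*exp y); [nra|]. rewrite L, Rr. apply Rmult_le_compat_l; lra. }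
  assert (Step3 : C * D / y < eps).
  { unfold Rdiv. rewrite <- Hhy.
    assert (h * (C * D + 1) < eps).
    { apply (Rmult_lt_compat_r (C*D+1)) in Hhe.
      2:{ assert (0 <= C * D) by (apply Rmult_le_pos; lra). lra. }
      unfold Rdiv in Hhe. rewrite Rmult_assoc, Rinv_l in Hhe. lra.
      assert (0 <= C * D) by (apply Rmult_le_pos; lra). lra. }
    assert (0 <= C * D) by (apply Rmult_le_pos; lra). nra. }
  lra.
Qed.

Lemma loc_lt x (P : R -> Prop) a b : a < x < b -> (forall y, a < y < b -> P y) -> locally x P.
Proof.
  intros [H1 H2] HP. apply (locally_interval P x a b); simpl; auto.
Qed.

Lemma gfun_deriv P : ispoly P -> exists P2, ispoly P2 /\ forall x, is_derive (gfun P) x (gfun P2 x).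
Proof.
  intros HP. destruct (poly_deriv P HP) as [P' [HP' DP]].
  exists (fun y => (y * y) * (P y + (-1) * P' y)). split.
  { repeat constructor; auto. }
  intros x. destruct (Rlt_dec 0 x) as [Hx|Hx].
  -
    apply is_derive_ext_loc with (f := fun z => P (/ z) * exp (- / z)).
    { apply (loc_lt x _ 0 (x+1)); [lra|]. intros y Hy. unfold gfun.
      destruct (Rlt_dec 0 y); [reflexivity| lra]. }
    unfold gfun. destruct (Rlt_dec 0 x) as [_|]; [|lra].
    auto_derive.
    + repeat split; try lra. exists (P' (/ x)). apply DP.
    + replace (Derive (fun x0 => P x0) (/ x)) with (P' (/ x)) by (symmetry; apply is_derive_unique; apply DP). field. lra.
  - destruct (Rlt_dec x 0) as [Hn|Hn].
    + apply is_derive_ext_loc with (f := fun _ => 0).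
      { apply (loc_lt x _ (x-1) 0); [lra|]. intros y Hy. unfold gfun.
        destruct (Rlt_dec 0 y); [lra| reflexivity]. }
      unfold gfun. destruct (Rlt_dec 0 x); [lra|].
      exact (is_derive_const 0 x).
    + assert (x = 0) by lra. subst x.
      unfold gfun at 2. destruct (Rlt_dec 0 0); [lra|].
      apply is_derive_Reals. intros eps Heps.
      destruct (gfun_small P HP eps Heps) as [eta [Heta Hs]].
      exists (mkposreal eta Heta). intros h Hh0 Hh. simpl in Hh.
      rewrite Rplus_0_l. unfold gfun. destruct (Rlt_dec 0 0); [lra|].
      destruct (Rlt_dec 0 h) as [Hp|Hp].
      * rewrite Rminus_0_r, Rminus_0_r. apply Hs. split; auto.
        rewrite Rabs_right in Hh; lra.
      * replace ((0 - 0) / h - 0) with 0 by (field; auto). rewrite Rabs_R0; auto.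
Qed.

Fixpoint hd (k : nat) : R -> R :=
  match k with
  | O => gfun (fun _ => 1)
  | S k' => Derive (hd k')
  end.

Lemma hd_gfun k : exists P, ispoly P /\ hd k = gfun P.
Proof.
  induction k as [|k [P [HP E]]].
  - exists (fun _ => 1); split; [constructor|reflexivity].
  - destruct (gfun_deriv P HP) as [P2 [HP2 D]].
    exists P2; split; auto. simpl. rewrite E.
    apply functional_extensionality; intros x. apply is_derive_unique, D.
Qed.

Lemma hd_deriv k x : is_derive (hd k) x (hd (S k) x).
Proof.
  destruct (hd_gfun k) as [P [HP E]].
  destruct (gfun_deriv P HP) as [P2 [HP2 D]].
  simpl. rewrite E. rewrite (is_derive_unique _ _ _ (D x)). apply D.
Qed.

Lemma hd_cont k x : continuous (hd k) x.
Proof. apply (ex_derive_continuous (hd k) x). exists (hd (S k) x). apply hd_deriv. Qed.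

Inductive expr :=
| EC (r : R) | EV (i : nat) | EAdd (a b : expr) | EMul (a b : expr)
| EInv (a : expr) | EH (k : nat) (a : expr).

Fixpoint eval (e : expr) (p q r : R) : R :=
  match e with
  | EC c => c
  | EV i => match i with O => p | S O => q | _ => r end
  | EAdd a b => eval a p q r + eval b p q r
  | EMul a b => eval a p q r * eval b p q r
  | EInv a => / eval a p q r
  | EH k a => hd k (eval a p q r)
  end.

Definition idx (i : nat) : nat := match i with O => O | S O => 1%nat | _ => 2%nat end.

Fixpoint deriv (i : nat) (e : expr) : expr :=
  match e with
  | EC _ => EC 0
  | EV j => EC (if Nat.eqb (idx i) (idx j) then 1 else 0)
  | EAdd a b => EAdd (deriv i a) (deriv i b)
  | EMul a b => EAdd (EMul (deriv i a) b) (EMul a (deriv i b))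
  | EInv a => EMul (EC (-1)) (EMul (deriv i a) (EMul (EInv a) (EInv a)))
  | EH k a => EMul (EH (S k) a) (deriv i a)
  end.

Fixpoint wf (e : expr) : Prop :=
  match e with
  | EC _ | EV _ => True
  | EAdd a b | EMul a b => wf a /\ wf b
  | EInv a => wf a /\ forall p q r, eval a p q r <> 0
  | EH _ a => wf a
  end.

Lemma wf_deriv i e : wf e -> wf (deriv i e).
Proof.
  induction e; simpl; intuition.
Qed.

Definition p1 i (a s : R) := match idx i with O => s | _ => a end.
Definition p2 i (b s : R) := match idx i with S O => s | _ => b end.
Definition p3 i (c s : R) := match idx i with S (S _) => s | _ => c end.
Definition coord i (a b c : R) := match idx i with O => a | S O => b | _ => c end.

Lemma deriv_ok i e a b c : wf e ->
  is_derive (fun s => eval e (p1 i a s) (p2 i b s) (p3 i c s)) (coord i a b c)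
            (eval (deriv i e) a b c).
Proof.
  induction e as [r|j|e1 IH1 e2 IH2|e1 IH1 e2 IH2|e1 IH1|k e1 IH1]; simpl; intros Hwf.
  - exact (is_derive_const r _).
  - destruct i as [|[|i]]; destruct j as [|[|j]]; simpl;
      first [exact (is_derive_const _ _) | exact (is_derive_id _)].
  - destruct Hwf as [W1 W2].
    exact (is_derive_plus _ _ _ _ _ (IH1 W1) (IH2 W2)).
  - destruct Hwf as [W1 W2].
    assert (E1 : eval e1 a b c = eval e1 (p1 i a (coord i a b c)) (p2 i b (coord i a b c)) (p3 i c (coord i a b c))).
    { unfold p1, p2, p3, coord; destruct i as [|[|i]]; reflexivity. }
    assert (E2 : eval e2 a b c = eval e2 (p1 i a (coord i a b c)) (p2 i b (coord i a b c)) (p3 i c (coord i a b c))).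
    { unfold p1, p2, p3, coord; destruct i as [|[|i]]; reflexivity. }
    pose proof (is_derive_mult _ _ _ _ _ (IH1 W1) (IH2 W2) (fun x y => Rmult_comm x y)) as D.
    simpl in D. rewrite <- E1, <- E2 in D.
    eapply is_derive_ext; [|exact D]. intros; reflexivity.
    all: idtac.
  - destruct Hwf as [W1 W2].
    assert (E1 : eval e1 a b c = eval e1 (p1 i a (coord i a b c)) (p2 i b (coord i a b c)) (p3 i c (coord i a b c))).
    { unfold p1, p2, p3, coord; destruct i as [|[|i]]; reflexivity. }
    pose proof (is_derive_inv _ _ _ (IH1 W1)) as D.
    specialize (D (W2 _ _ _)). cbv beta in D. rewrite <- E1 in D.
    replace (-1 * (eval (deriv i e1) a b c * (/ eval e1 a b c * / eval e1 a b c)))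
      with (- eval (deriv i e1) a b c / (eval e1 a b c) ^ 2).
    2:{ field. apply W2. }
    exact D.
  - assert (E1 : eval e1 a b c = eval e1 (p1 i a (coord i a b c)) (p2 i b (coord i a b c)) (p3 i c (coord i a b c))).
    { unfold p1, p2, p3, coord; destruct i as [|[|i]]; reflexivity. }
    pose proof (is_derive_comp (hd k) _ _ _ _ (hd_deriv k _) (IH1 Hwf)) as D.
    cbv beta in D. rewrite <- E1 in D.
    rewrite Rmult_comm. exact D.
Qed.

Definition U3 (e : expr) (p : R * R * R) : R := eval e (fst (fst p)) (snd (fst p)) (snd p).

Lemma eval_cont e : wf e -> forall q, continuous (U3 e) q.
Proof.
  unfold U3.
  induction e as [r|j|e1 IH1 e2 IH2|e1 IH1 e2 IH2|e1 IH1|k e1 IH1]; simpl; intros Hwf q.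
  - apply continuous_const.
  - destruct q as [[x y] z].
    destruct j as [|[|j]].
    + apply (continuous_comp (fun p : R*R*R => fst p) fst). apply continuous_fst. apply continuous_fst.
    + apply (continuous_comp (fun p : R*R*R => fst p) snd). apply continuous_fst. apply continuous_snd.
    + apply continuous_snd.
  - destruct Hwf as [W1 W2].
    exact (continuous_plus _ _ q (IH1 W1 q) (IH2 W2 q)).
  - destruct Hwf as [W1 W2].
    exact (continuous_mult _ _ q (IH1 W1 q) (IH2 W2 q)).
  - destruct Hwf as [W1 W2].
    apply (continuous_comp _ (fun x => / x)). apply IH1; auto.
    apply continuous_Rinv. apply W2.
  - apply (continuous_comp _ (hd k)). apply IH1; auto. apply hd_cont.
Qed.

Lemma cont3_of (g : R -> R -> R -> R) :
  (forall q, continuous (fun p : R*R*R => g (fst (fst p)) (snd (fst p)) (snd p)) q) -> cont3 g.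
Proof.
  intros Hc a b c eps Heps.
  specialize (Hc (a, b, c)).
  assert (L : locally (g a b c) (ball (g a b c) (mkposreal eps Heps))) by apply locally_ball.
  specialize (Hc _ L). simpl in Hc.
  destruct Hc as [d Hd].
  exists d; split; [apply cond_pos|].
  intros a' b' c' Ha Hb Hc.
  specialize (Hd (a', b', c')).
  assert (B : ball (a, b, c) d (a', b', c')).
  { split; [split|]; simpl; unfold ball; simpl; unfold AbsRing_ball; simpl;
      unfold abs, minus, plus, opp; simpl; assumption. }
  specialize (Hd B). simpl in Hd. unfold ball in Hd; simpl in Hd; unfold AbsRing_ball in Hd.
  unfold abs, minus, plus, opp in Hd; simpl in Hd. exact Hd.
Qed.

Fixpoint derivs (l : list nat) (e : expr) : expr :=
  match l with nil => e | i :: l' => deriv i (derivs l' e) end.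

Lemma wf_derivs l e : wf e -> wf (derivs l e).
Proof. induction l; simpl; auto using wf_deriv. Qed.

Lemma iter_eval l e : wf e -> iter_partial3 l (eval e) = eval (derivs l e).
Proof.
  intros W. induction l as [|i l IH]; simpl; auto.
  rewrite IH. apply functional_extensionality; intros a.
  apply functional_extensionality; intros b.
  apply functional_extensionality; intros c.
  pose proof (wf_derivs l e W) as W'.
  unfold partial3. destruct i as [|[|i]].
  - exact (is_derive_unique _ _ _ (deriv_ok 0 _ a b c W')).
  - exact (is_derive_unique _ _ _ (deriv_ok 1 _ a b c W')).
  - exact (is_derive_unique _ _ _ (deriv_ok (S (S i)) _ a b c W')).
Qed.

Lemma smooth_eval e : wf e -> smooth3 (eval e).
Proof.
  intros W l. rewrite (iter_eval l e W).
  pose proof (wf_derivs l e W) as W'.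
  split.
  - apply cont3_of. apply (eval_cont _ W').
  - intros a b c. split; [|split].
    + eexists. exact (deriv_ok 0 _ a b c W').
    + eexists. exact (deriv_ok 1 _ a b c W').
    + eexists. exact (deriv_ok 2 _ a b c W').
Qed.

Lemma cont1 e b c s0 : wf e -> continuous (fun s => eval e s b c) s0.
Proof.
  intros W.
  pose proof (eval_cont e W (s0, b, c)) as C.
  unfold U3 in C. simpl in C.
  intros P HP. specialize (C P HP). destruct C as [eps He].
  exists eps. intros y Hy. apply (He (y, b, c)).
  split; [split|]; simpl; auto; apply ball_center.
Qed.

Lemma der1 e b c s0 : wf e -> is_derive (fun s => eval e s b c) s0 (eval (deriv 0 e) s0 b c).
Proof. intros W. exact (deriv_ok 0 e s0 b c W). Qed.

Definition h := hd 0.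
Definition Hs (x : R) : R := h x * / (h x + h (1 + -1 * x)).

Lemma h_pos x : 0 < x -> h x = exp (- / x).
Proof. intros Hx. unfold h, hd, gfun. destruct (Rlt_dec 0 x); [ring|lra]. Qed.
Lemma h_zero x : x <= 0 -> h x = 0.
Proof. intros Hx. unfold h, hd, gfun. destruct (Rlt_dec 0 x); [lra|reflexivity]. Qed.
Lemma h_ge0 x : 0 <= h x.
Proof. destruct (Rlt_dec 0 x). rewrite h_pos; auto. left; apply exp_pos. rewrite h_zero; lra. Qed.
Lemma h_gt0 x : 0 < x -> 0 < h x.
Proof. intros; rewrite h_pos; auto; apply exp_pos. Qed.
Lemma h_sum_pos x : 0 < h x + h (1 + -1 * x).
Proof.
  destruct (Rlt_dec 0 x).
  - pose proof (h_gt0 x r); pose proof (h_ge0 (1 + -1*x)); lra.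
  - pose proof (h_gt0 (1 + -1*x)); pose proof (h_ge0 x); lra.
Qed.

Definition eH (e : expr) : expr :=
  EMul (EH 0 e) (EInv (EAdd (EH 0 e) (EH 0 (EAdd (EC 1) (EMul (EC (-1)) e))))).

Lemma eH_eval e p q r : eval (eH e) p q r = Hs (eval e p q r).
Proof. reflexivity. Qed.

Lemma wf_eH e : wf e -> wf (eH e).
Proof.
  intros W. simpl. repeat split; auto.
  intros p q r. pose proof (h_sum_pos (eval e p q r)) as Hsum. unfold h in Hsum. simpl in Hsum |- *. lra.
Qed.

Lemma H_cont x : continuous Hs x.
Proof. apply (cont1 (eH (EV 0)) 0 0 x). apply wf_eH; simpl; auto. Qed.

Lemma H_exd x : ex_derive Hs x.
Proof. eexists. apply (der1 (eH (EV 0)) 0 0 x). apply wf_eH; simpl; auto. Qed.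

Definition Hs' := Derive Hs.

Lemma H_der x : is_derive Hs x (Hs' x).
Proof. unfold Hs'. apply Derive_correct, H_exd. Qed.

Lemma Hs'_cont x : continuous Hs' x.
Proof.
  assert (E : Hs' = fun s => eval (deriv 0 (eH (EV 0))) s 0 0).
  { apply functional_extensionality; intros s. unfold Hs'.
    apply is_derive_unique. apply (der1 (eH (EV 0)) 0 0 s). apply wf_eH; simpl; auto. }
  rewrite E. apply cont1. apply wf_deriv, wf_eH; simpl; auto.
Qed.

Lemma H_0 x : x <= 0 -> Hs x = 0.
Proof. intros; unfold Hs; rewrite h_zero; auto; ring. Qed.

Lemma H_1 x : 1 <= x -> Hs x = 1.
Proof.
  intros; unfold Hs. rewrite (h_zero (1 + -1*x)) by lra. rewrite Rplus_0_r.
  field. pose proof (h_gt0 x); lra.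
Qed.

Lemma H_range x : 0 <= Hs x <= 1.
Proof.
  unfold Hs. pose proof (h_sum_pos x). pose proof (h_ge0 x). pose proof (h_ge0 (1 + -1*x)).
  split.
  - apply Rmult_le_pos; auto. left; apply Rinv_0_lt_compat; auto.
  - apply (Rmult_le_reg_r (h x + h (1 + -1 * x))); auto.
    rewrite Rmult_assoc, Rinv_l by lra. lra.
Qed.

Lemma H_sym x : Hs (1 + -1 * x) = 1 - Hs x.
Proof.
  unfold Hs. replace (1 + -1 * (1 + -1 * x)) with x by ring.
  pose proof (h_sum_pos x). field. lra.
Qed.

Lemma H_half : Hs (/2) = /2.
Proof.
  pose proof (H_sym (/2)) as HS. replace (1 + -1 * /2) with (/2) in HS by field. lra.
Qed.

Lemma H_strict x y : 0 <= x -> x < y -> y <= 1 -> Hs x < Hs y.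
Proof.
  intros Hx Hxy Hy. unfold Hs.
  pose proof (h_sum_pos x) as Sx. pose proof (h_sum_pos y) as Sy.
  set (Ax := h x) in *. set (Ay := h y) in *.
  set (Bx := h (1 + -1 * x)) in *. set (By := h (1 + -1 * y)) in *.
  assert (Key : Ax * By < Ay * Bx).
  { destruct (Req_dec x 0) as [E0|E0].
    - unfold Ax. rewrite h_zero by lra.
      assert (0 < Ay) by (apply h_gt0; lra). assert (0 < Bx) by (apply h_gt0; lra).
      rewrite Rmult_0_l. apply Rmult_lt_0_compat; auto.
    - destruct (Req_dec y 1) as [E1|E1].
      + unfold By. rewrite h_zero by lra.
        assert (0 < Ay) by (apply h_gt0; lra). assert (0 < Bx) by (apply h_gt0; lra).
        rewrite Rmult_0_r. apply Rmult_lt_0_compat; auto.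
      + unfold Ax, Ay, Bx, By. rewrite !h_pos by lra.
        rewrite <- !exp_plus. apply exp_increasing.
        assert (/ y < / x) by (apply Rinv_lt_contravar; nra).
        assert (/ (1 + -1 * x) < / (1 + -1 * y)) by (apply Rinv_lt_contravar; nra).
        lra. }
  apply (Rmult_lt_reg_r ((Ax + Bx) * (Ay + By))); [apply Rmult_lt_0_compat; auto|].
  replace (Ax * / (Ax + Bx) * ((Ax + Bx) * (Ay + By))) with (Ax * (Ay + By)) by (field; lra).
  replace (Ay * / (Ay + By) * ((Ax + Bx) * (Ay + By))) with (Ay * (Ax + Bx)) by (field; lra).
  nra.
Qed.

Lemma H_mono x y : x <= y -> Hs x <= Hs y.
Proof.
  intros Hxy.
  destruct (Rle_dec y 0). { rewrite !H_0 by lra; lra. }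
  destruct (Rle_dec 1 x). { rewrite !H_1 by lra; lra. }
  destruct (Req_dec x y). { subst; lra. }
  pose proof (H_range x); pose proof (H_range y).
  destruct (Rle_dec x 0).
  - rewrite (H_0 x) by lra. lra.
  - destruct (Rle_dec 1 y).
    + rewrite (H_1 y) by lra. lra.
    + left. apply H_strict; lra.
Qed.

Lemma Hs'_pos x : 0 < x < 1 -> 0 < Hs' x.
Proof.
  intros Hx.
  set (A := exp (- / x)). set (B := exp (- / (1 + -1 * x))).
  assert (HA : 0 < A) by apply exp_pos. assert (HB : 0 < B) by apply exp_pos.
  assert (D : is_derive (fun z => exp (- / z) * / (exp (- / z) + exp (- / (1 + -1 * z)))) x
             (A * B * (/ (x * x) + / ((1 + -1 * x) * (1 + -1 * x))) / ((A + B) * (A + B)))).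
  { auto_derive.
    - repeat split; try lra. pose proof (exp_pos (- / x)); pose proof (exp_pos (- / (1 + -1*x))). lra.
    - unfold A, B. field. pose proof (exp_pos (- / x)); pose proof (exp_pos (- / (1 + -1*x))). lra. }
  assert (D2 : is_derive Hs x (A * B * (/ (x * x) + / ((1 + -1 * x) * (1 + -1 * x))) / ((A + B) * (A + B)))).
  { apply (is_derive_ext_loc (fun z => exp (- / z) * / (exp (- / z) + exp (- / (1 + -1 * z))))); [|exact D].
    apply (loc_lt x _ 0 1 Hx). intros y Hy. unfold Hs. rewrite !h_pos by lra. reflexivity. }
  unfold Hs'. rewrite (is_derive_unique _ _ _ D2).
  assert (0 < / (x*x)) by (apply Rinv_0_lt_compat; nra).
  assert (0 < / ((1 + -1 * x) * (1 + -1 * x))) by (apply Rinv_0_lt_compat; nra).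
  apply Rdiv_lt_0_compat; [|nra].
  apply Rmult_lt_0_compat; [nra|lra].
Qed.

Lemma Hs'_zero x : x < 0 \/ 1 < x -> Hs' x = 0.
Proof.
  intros [Hx|Hx]; unfold Hs'.
  - apply is_derive_unique.
    apply (is_derive_ext_loc (fun _ => 0)). 
    + apply (loc_lt x _ (x-1) 0); [lra|]. intros y Hy. rewrite H_0; lra.
    + exact (is_derive_const 0 x).
  - apply is_derive_unique.
    apply (is_derive_ext_loc (fun _ => 1)).
    + apply (loc_lt x _ 1 (x+1)); [lra|]. intros y Hy. rewrite H_1; lra.
    + exact (is_derive_const 1 x).
Qed.

Lemma Hs'_bound : exists K, 0 <= K /\ forall x, Rabs (Hs' x) <= K.
Proof.
  destruct (continuity_ab_maj (fun x => Rabs (Hs' x)) 0 1) as [Mx [HM HMx]]; [lra| |].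
  - intros c Hc. apply continuity_pt_filterlim.
    apply (continuous_comp Hs' Rabs). apply Hs'_cont. apply continuous_Rabs.
  - exists (Rabs (Hs' Mx)). split; [apply Rabs_pos|].
    intros x. destruct (Rle_dec 0 x); [destruct (Rle_dec x 1)|].
    + apply HM; lra.
    + rewrite Hs'_zero by lra. rewrite Rabs_R0; apply Rabs_pos.
    + rewrite Hs'_zero by lra. rewrite Rabs_R0; apply Rabs_pos.
Qed.

Definition nu t := Hs (2 + 2 * t).
Definition lam t := Hs (1 + 2 * t) * (1 + 1 * t).
Definition bb x := Hs (2 + 2 * x) * Hs (2 + -2 * x).
Definition uu x := Hs (/2 + 1 * x).
Definition qq x := 4 * (uu x * (1 + -1 * uu x)).
Definition QQ t x := lam t * qq x.
Definition cc d y := Hs ((1 + 2 * d) / d + - / d * y) * Hs ((1 + 2 * d) / d + / d * y).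
Definition PP d t x := (/4 - d) * (nu t * bb x).
Definition ww d t x := /4 + -1 * PP d t x.
Definition FF d t x y := (y * y + -1) * (/4 + -1 * (PP d t x * cc d y)) + ww d t x * QQ t x * cc d y.

Definition eA (b a : R) (e : expr) := EAdd (EC b) (EMul (EC a) e).
Definition e_nu := eH (eA 2 2 (EV 0)).
Definition e_lam := EMul (eH (eA 1 2 (EV 0))) (eA 1 1 (EV 0)).
Definition e_bb xe := EMul (eH (eA 2 2 xe)) (eH (eA 2 (-2) xe)).
Definition e_uu xe := eH (eA (/2) 1 xe).
Definition e_qq xe := EMul (EC 4) (EMul (e_uu xe) (eA 1 (-1) (e_uu xe))).
Definition e_QQ le xe := EMul le (e_qq xe).
Definition e_cc d ye := EMul (eH (eA ((1 + 2 * d) / d) (- / d) ye)) (eH (eA ((1 + 2 * d) / d) (/ d) ye)).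
Definition e_PP d := EMul (EC (/4 - d)) (EMul e_nu (e_bb (EV 1))).
Definition e_ww d := eA (/4) (-1) (e_PP d).
Definition E d := EAdd (EMul (EAdd (EMul (EV 2) (EV 2)) (EC (-1)))
                             (EAdd (EC (/4)) (EMul (EC (-1)) (EMul (e_PP d) (e_cc d (EV 2))))))
                       (EMul (EMul (e_ww d) (e_QQ e_lam (EV 1))) (e_cc d (EV 2))).

Definition Fd (d : R) : R -> R -> R -> R := eval (E d).

Lemma Fd_FF d t x y : Fd d t x y = FF d t x y.
Proof. reflexivity. Qed.

Lemma wf_EAdd a b : wf a -> wf b -> wf (EAdd a b). Proof. simpl; auto. Qed.
Lemma wf_EMul a b : wf a -> wf b -> wf (EMul a b). Proof. simpl; auto. Qed.
Lemma wf_EC c : wf (EC c). Proof. simpl; auto. Qed.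
Lemma wf_EV i : wf (EV i). Proof. simpl; auto. Qed.

Ltac wfauto := repeat match goal with
  | |- wf (eH _) => apply wf_eH
  | |- wf (EAdd _ _) => apply wf_EAdd
  | |- wf (EMul _ _) => apply wf_EMul
  | |- wf (EC _) => apply wf_EC
  | |- wf (EV _) => apply wf_EV
  end.

Lemma wf_E d : wf (E d).
Proof.
  unfold E, e_ww, e_PP, e_QQ, e_lam, e_cc, e_qq, e_uu, e_bb, e_nu, eA. wfauto.
Qed.

Lemma Fd_smooth d : smooth3 (Fd d).
Proof. apply smooth_eval, wf_E. Qed.

Lemma nu_range t : 0 <= nu t <= 1. Proof. apply H_range. Qed.
Lemma bb_range x : 0 <= bb x <= 1.
Proof. unfold bb. pose proof (H_range (2 + 2*x)); pose proof (H_range (2 + -2*x)). split; nra. Qed.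
Lemma uu_range x : 0 <= uu x <= 1. Proof. apply H_range. Qed.
Lemma qq_range x : 0 <= qq x <= 1.
Proof. unfold qq. pose proof (uu_range x). set (u := uu x) in *.
  assert (0 <= (2*u-1)*(2*u-1)) by (apply Rle_0_sqr).
  assert (0 <= u*(1 + -1 * u)) by (apply Rmult_le_pos; lra). split; nra. Qed.
Lemma cc_range d y : 0 <= cc d y <= 1.
Proof. unfold cc. pose proof (H_range ((1 + 2 * d) / d + - / d * y)); pose proof (H_range ((1 + 2 * d) / d + / d * y)). split; nra. Qed.

Lemma lam_range t : -1 <= t <= 1 -> 0 <= lam t <= 2.
Proof. intros Ht; unfold lam. pose proof (H_range (1 + 2*t)) as Hr.
  assert (0 <= Hs (1 + 2 * t) * (1 + 1 * t)) by (apply Rmult_le_pos; lra).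
  assert (Hs (1 + 2 * t) * (1 + 1 * t) <= 1 * (1 + 1 * t)) by (apply Rmult_le_compat_r; lra).
  lra. Qed.

Lemma QQ_range t x : -1 <= t <= 1 -> 0 <= QQ t x <= 2.
Proof. intros Ht. unfold QQ. pose proof (lam_range t Ht). pose proof (qq_range x). split; nra. Qed.

Section WithD.
Variable d : R.
Hypothesis Hd : 0 < d <= / 10.

Lemma PP_range t x : 0 <= PP d t x <= /4 - d.
Proof. unfold PP. pose proof (nu_range t); pose proof (bb_range x).
  assert (0 <= nu t * bb x <= 1) by (split; nra).
  assert (0 <= /4 - d) by lra. split; [apply Rmult_le_pos; lra|].
  rewrite <- (Rmult_1_r (/4 - d)) at 2. apply Rmult_le_compat_l; lra. Qed.

Lemma ww_range t x : d <= ww d t x <= /4.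
Proof. unfold ww. pose proof (PP_range t x). lra. Qed.

Lemma cc_one y : Rabs y <= 1 + d -> cc d y = 1.
Proof.
  intros Hy. apply Rabs_le_between in Hy. unfold cc.
  rewrite !H_1. ring.
  - apply (Rmult_le_reg_l d); [lra|]. field_simplify; lra.
  - apply (Rmult_le_reg_l d); [lra|]. field_simplify; lra.
Qed.

Lemma cc_zero y : 1 + 2 * d <= Rabs y -> cc d y = 0.
Proof.
  intros Hy. unfold cc. destruct (Rle_dec 0 y).
  - rewrite Rabs_right in Hy by lra. rewrite (H_0 ((1 + 2 * d) / d + - / d * y)). ring.
    apply (Rmult_le_reg_l d); [lra|]. field_simplify; lra.
  - rewrite Rabs_left in Hy by lra. rewrite (H_0 ((1 + 2 * d) / d + / d * y)). ring.
    apply (Rmult_le_reg_l d); [lra|]. field_simplify; lra.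
Qed.

Lemma F_inner t x y : Rabs y <= 1 + d -> FF d t x y = ww d t x * (y * y + -1 + QQ t x).
Proof. intros Hy. unfold FF. rewrite cc_one by auto. unfold ww. ring. Qed.

Lemma F_outer_pos t x y : -1 <= t <= 1 -> 1 < Rabs y -> 0 < FF d t x y.
Proof.
  intros Ht Hy. unfold FF.
  pose proof (PP_range t x) as HP. pose proof (cc_range d y) as HC.
  pose proof (ww_range t x) as HW. pose proof (QQ_range t x Ht) as HQ.
  assert (Hy2 : 1 < y * y).
  { destruct (Rle_dec 0 y); [rewrite Rabs_right in Hy by lra | rewrite Rabs_left in Hy by lra]; nra. }
  assert (A1 : PP d t x * cc d y <= /4 - d) by nra.
  assert (A2 : 0 <= ww d t x * QQ t x * cc d y).
  { apply Rmult_le_pos; [apply Rmult_le_pos|]; lra. }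
  nra.
Qed.

Lemma zero_iff t x y : -1 <= t <= 1 -> (FF d t x y = 0 <-> y * y = 1 - QQ t x).
Proof.
  intros Ht. pose proof (QQ_range t x Ht). pose proof (ww_range t x).
  destruct (Rle_dec (Rabs y) 1) as [Hy|Hy].
  - rewrite F_inner by lra. split; intros E.
    + apply Rmult_integral in E. destruct E; lra.
    + replace (y * y + -1 + QQ t x) with 0 by lra. ring.
  - pose proof (F_outer_pos t x y Ht ltac:(lra)).
    assert (1 < y * y).
    { destruct (Rle_dec 0 y); [rewrite Rabs_right in Hy by lra | rewrite Rabs_left in Hy by lra]; nra. }
    split; intros; lra.
Qed.

Lemma F_init x y : FF d (-1) x y = f0 x y.
Proof.
  unfold FF, f0, PP, ww, QQ, nu, lam.
  replace (2 + 2 * -1) with 0 by ring. replace (1 + 1 * -1) with 0 by ring.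
  rewrite H_0 by lra. simpl. ring.
Qed.

Lemma QQ_far t x : 1 <= Rabs x -> QQ t x = 0.
Proof.
  intros Hx. unfold QQ, qq, uu. destruct (Rle_dec 0 x).
  - rewrite Rabs_right in Hx by lra. rewrite H_1 by lra. ring.
  - rewrite Rabs_left in Hx by lra. rewrite H_0 by lra. ring.
Qed.

Lemma bb_far x : 1 <= Rabs x -> bb x = 0.
Proof.
  intros Hx. unfold bb. destruct (Rle_dec 0 x).
  - rewrite Rabs_right in Hx by lra. rewrite (H_0 (2 + -2 * x)) by lra. ring.
  - rewrite Rabs_left in Hx by lra. rewrite (H_0 (2 + 2 * x)) by lra. ring.
Qed.

Lemma F_indep t t' x y : ~ in_box (1 + 2 * d) x y -> FF d t x y = FF d t' x y.
Proof.
  intros Hn. unfold in_box in Hn.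
  destruct (Rle_dec (1 + 2 * d) (Rabs y)) as [Hy|Hy].
  - unfold FF. rewrite cc_zero by auto. ring.
  - assert (Hx : 1 + 2 * d < Rabs x).
    { destruct (Rlt_dec (1 + 2 * d) (Rabs x)); auto. exfalso. apply Hn.
      split; apply Rabs_le_between; lra. }
    unfold FF, ww, PP. rewrite !QQ_far by lra. rewrite bb_far by lra. ring.
Qed.

Definition V t x := 1 + -1 * QQ t x.

Lemma V_far t x : 1 <= Rabs x -> V t x = 1.
Proof. intros; unfold V; rewrite QQ_far by auto; ring. Qed.

Lemma zero_iffV t x y : -1 <= t <= 1 -> (FF d t x y = 0 <-> y * y = V t x).
Proof. intros Ht. rewrite zero_iff by auto. unfold V. split; intros; lra. Qed.

Lemma sq_cases y v : y * y = v -> y = sqrt v \/ y = - sqrt v.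
Proof.
  intros E. subst v. destruct (Rle_dec 0 y).
  - left. rewrite sqrt_square; auto.
  - right. replace (y * y) with ((-y) * (-y)) by ring. rewrite sqrt_square by lra. ring.
Qed.

Definition eV (lc : R) (xe : expr) := EAdd (EC 1) (EMul (EC (-1)) (e_QQ (EC lc) xe)).

Lemma wf_eV lc xe : wf xe -> wf (eV lc xe).
Proof. intros W. unfold eV, e_QQ, e_qq, e_uu, eA. wfauto; auto. Qed.

Lemma V_cont_aff t a b s : continuous (fun r => V t (a + b * r)) s.
Proof.
  apply (continuous_ext (fun r => eval (eV (lam t) (eA a b (EV 0))) r 0 0)).
  { intros; reflexivity. }
  apply cont1, wf_eV. unfold eA; wfauto.
Qed.

Lemma aff_cont a b s : continuous (fun r => a + b * r) s.
Proof.
  apply (continuous_ext (fun r => eval (eA a b (EV 0)) r 0 0)).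
  { intros; reflexivity. }
  apply cont1. unfold eA; wfauto.
Qed.

Lemma V_le1 t x : -1 <= t <= 1 -> V t x <= 1.
Proof. intros Ht; unfold V; pose proof (QQ_range t x Ht); lra. Qed.

Lemma lam_neg t : -1 <= t < 0 -> 0 <= lam t < 1.
Proof.
  intros Ht; unfold lam. pose proof (H_range (1 + 2*t)) as Hr.
  assert (0 <= Hs (1 + 2 * t) * (1 + 1 * t)) by (apply Rmult_le_pos; lra).
  assert (Hs (1 + 2 * t) * (1 + 1 * t) <= 1 * (1 + 1 * t)) by (apply Rmult_le_compat_r; lra).
  lra.
Qed.

Lemma V_pos_neg t x : -1 <= t < 0 -> 0 < V t x.
Proof.
  intros Ht. unfold V, QQ. pose proof (lam_neg t Ht). pose proof (qq_range x).
  assert (lam t * qq x <= lam t * 1) by (apply Rmult_le_compat_l; lra). lra.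
Qed.

Lemma sqrt_le1 v : v <= 1 -> sqrt v <= 1.
Proof. intros; rewrite <- sqrt_1. apply sqrt_le_1_alt; auto. Qed.

Lemma case_neg t : -1 <= t < 0 ->
  two_disjoint_arcs (zero_set (Fd d t)) (-2, 1) (2, 1) (-2, -1) (2, -1).
Proof.
  intros Ht. assert (Ht' : -1 <= t <= 1) by lra.
  exists (fun s => (-2 + 4 * s, sqrt (V t (-2 + 4 * s)))).
  exists (fun s => (-2 + 4 * s, - sqrt (V t (-2 + 4 * s)))).
  assert (Inj : forall s s' : R, -2 + 4 * s = -2 + 4 * s' -> s = s') by (intros; lra).
  split; [|split; [|split; [|split; [|split; [|split; [|split]]]]]].
  - split.
    + intros s _. split; [apply aff_cont|]. apply continuous_sqrt_comp, V_cont_aff.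
    + intros s s' _ _ E. injection E; intros; apply Inj; auto.
  - split.
    + intros s _. split; [apply aff_cont|].
      apply (continuous_opp (fun r => sqrt (V t (-2 + 4 * r)))).
      apply continuous_sqrt_comp, V_cont_aff.
    + intros s s' _ _ E. injection E; intros; apply Inj; auto.
  - f_equal; [ring|]. rewrite V_far. apply sqrt_1. replace (-2 + 4 * 0) with (-2) by ring.
    rewrite Rabs_left; lra.
  - f_equal; [ring|]. rewrite V_far. apply sqrt_1. replace (-2 + 4 * 1) with 2 by ring.
    rewrite Rabs_right; lra.
  - f_equal; [ring|]. rewrite V_far. rewrite sqrt_1; ring. replace (-2 + 4 * 0) with (-2) by ring.
    rewrite Rabs_left; lra.
  - f_equal; [ring|]. rewrite V_far. rewrite sqrt_1; ring. replace (-2 + 4 * 1) with 2 by ring.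
    rewrite Rabs_right; lra.
  - intros p [[s [Hs1 E1]] [s' [Hs2 E2]]]. subst p. injection E2; intros E3 E4.
    pose proof (V_pos_neg t (-2 + 4 * s) Ht). pose proof (V_pos_neg t (-2 + 4 * s') Ht).
    pose proof (sqrt_lt_R0 _ H). pose proof (sqrt_lt_R0 _ H0). lra.
  - intros p. split.
  + intros [Hb Hz]. destruct p as [x y]. simpl in Hb, Hz. unfold Fd in Hz.
    change (FF d t x y = 0) in Hz. apply zero_iffV in Hz; auto.
    destruct Hb as [Hx Hy].
    assert (Es : -2 + 4 * ((x + 2) / 4) = x) by field.
    destruct (sq_cases _ _ Hz) as [Ey|Ey]; [left|right]; exists ((x + 2) / 4);
      (split; [lra|]); rewrite Es; rewrite Ey; reflexivity.
  + intros Hon. destruct p as [x y].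
    assert (Hs : exists s, 0 <= s <= 1 /\ x = -2 + 4 * s /\ (y = sqrt (V t x) \/ y = - sqrt (V t x))).
    { destruct Hon as [[s [Hs E]]|[s [Hs E]]]; injection E; intros; subst; exists s; auto. }
    destruct Hs as [s [Hs [Ex Ey]]].
    pose proof (V_pos_neg t x Ht). pose proof (V_le1 t x Ht').
    pose proof (sqrt_le1 _ H0). pose proof (sqrt_pos (V t x)).
    split.
    + simpl. split; [lra| destruct Ey as [Ey|Ey]; rewrite Ey; lra].
    + simpl. unfold Fd. change (FF d t x y = 0). apply zero_iffV; auto.
      destruct Ey; subst y; [|replace (- sqrt (V t x) * - sqrt (V t x)) with (sqrt (V t x) * sqrt (V t x)) by ring]; apply sqrt_sqrt; lra.
Qed.

Lemma bb_one x : Rabs x <= /2 -> bb x = 1.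
Proof. intros Hx. apply Rabs_le_between in Hx. unfold bb. rewrite !H_1 by lra. ring. Qed.

Lemma nu_one t : -/2 <= t -> nu t = 1.
Proof. intros. unfold nu. apply H_1. lra. Qed.

Lemma ww_d t x : -/2 <= t -> Rabs x <= /2 -> ww d t x = d.
Proof. intros. unfold ww, PP. rewrite nu_one, bb_one by auto. ring. Qed.

Lemma dx3_inner t x y : Rabs y < 1 + d -> dx3 (Fd d t) x y = ww d t x * (2 * y).
Proof.
  intros Hy. unfold dx3. apply is_derive_unique.
  apply (is_derive_ext_loc (fun z => ww d t x * (z * z + -1 + QQ t x))).
  - apply Rabs_lt_between in Hy.
    apply (loc_lt y _ (-(1+d)) (1+d)); [lra|]. intros z Hz.
    unfold Fd. change (ww d t x * (z * z + -1 + QQ t x) = FF d t x z).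
    rewrite F_inner; auto. apply Rabs_le_between; lra.
  - auto_derive; auto. ring.
Qed.

Lemma order_one_y t x y : Rabs y < 1 + d -> y <> 0 -> order_one_at (Fd d t) (x, y).
Proof.
  intros Hy Hy0 E. unfold order_one_at in E. simpl in E. injection E; intros E3 _.
  rewrite dx3_inner in E3 by auto. pose proof (ww_range t x).
  apply Rmult_integral in E3. destruct E3; lra.
Qed.

Lemma dx1_axis t x : -/2 <= t -> Rabs x < /2 ->
  dx1 (Fd d t) x 0 = d * (lam t * (4 * (Hs' (/2 + 1 * x) * (1 + -2 * uu x)))).
Proof.
  intros Ht Hx. unfold dx1. apply is_derive_unique.
  apply (is_derive_ext_loc (fun z => d * (-1 + lam t * (4 * (Hs (/2 + 1 * z) * (1 + -1 * Hs (/2 + 1 * z))))))).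
  - apply Rabs_lt_between in Hx.
    apply (loc_lt x _ (-/2) (/2)); [lra|]. intros z Hz.
    unfold Fd. change (d * (-1 + lam t * (4 * (Hs (/2 + 1 * z) * (1 + -1 * Hs (/2 + 1 * z))))) = FF d t z 0).
    rewrite F_inner by (rewrite Rabs_R0; lra).
    rewrite ww_d by (auto; apply Rabs_le_between; lra). unfold QQ, qq, uu. ring.
  - auto_derive.
    + repeat split; apply H_exd.
    + unfold uu, Hs'. change (Derive (fun x0 : R => Hs x0)) with (Derive Hs). ring.
Qed.

Lemma lam0 : lam 0 = 1.
Proof. unfold lam. rewrite H_1 by lra. ring. Qed.

Lemma V0 x : V 0 x = (1 + -2 * uu x) * (1 + -2 * uu x).
Proof. unfold V, QQ, qq. rewrite lam0. ring. Qed.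

Lemma uu_m2 : uu (-2 + 4 * 0) = 0.
Proof. unfold uu. apply H_0. lra. Qed.
Lemma uu_p2 : uu (-2 + 4 * 1) = 1.
Proof. unfold uu. apply H_1. lra. Qed.
Lemma uu_0 : uu (-2 + 4 * /2) = /2.
Proof. unfold uu. replace (/2 + 1 * (-2 + 4 * /2)) with (/2) by field. apply H_half. Qed.

Lemma uu_half_inj x : uu x = /2 -> x = 0.
Proof.
  intros E. unfold uu in E. set (z := /2 + 1 * x) in *.
  destruct (Rle_dec z 0). { rewrite H_0 in E by auto. lra. }
  destruct (Rle_dec 1 z). { rewrite H_1 in E by auto. lra. }
  destruct (Rtotal_order z (/2)) as [Hz|[Hz|Hz]].
  - pose proof (H_strict z (/2) ltac:(lra) Hz ltac:(lra)). rewrite H_half in H. lra.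
  - unfold z in Hz. lra.
  - pose proof (H_strict (/2) z ltac:(lra) Hz ltac:(lra)). rewrite H_half in H. lra.
Qed.

Lemma uu_aff_cont a b c e s : continuous (fun r => a + b * uu (c + e * r)) s.
Proof.
  apply (continuous_ext (fun r => eval (eA a b (e_uu (eA c e (EV 0)))) r 0 0)).
  { intros; reflexivity. }
  apply cont1. unfold e_uu, eA; wfauto.
Qed.

Lemma der_aff a b x : is_derive (fun r => a + b * r) x b.
Proof. auto_derive; auto. ring. Qed.

Lemma der_uu_aff a b x : is_derive (fun r => a + b * uu (-2 + 4 * r)) x (b * (4 * Hs' (/2 + 1 * (-2 + 4 * x)))).
Proof.
  unfold uu. auto_derive.
  - repeat split; apply H_exd.
  - unfold Hs'. change (Derive (fun x0 : R => Hs x0)) with (Derive Hs). ring.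
Qed.

Lemma case_zero :
  exists c : R * R,
    letter_X (zero_set (Fd d 0)) (-2, 1) (2, -1) (-2, -1) (2, 1) c /\
    quadratic_at (Fd d 0) c /\
    (forall p, zero_set (Fd d 0) p -> p <> c -> order_one_at (Fd d 0) p).
Proof.
  assert (Ht' : -1 <= 0 <= 1) by lra.
  exists (0, 0). split; [|split].
  - exists (fun s => (-2 + 4 * s, 1 + -2 * uu (-2 + 4 * s))).
    exists (fun s => (-2 + 4 * s, -1 + 2 * uu (-2 + 4 * s))).
    exists (/2), (/2).
    assert (Inj : forall s s' : R, -2 + 4 * s = -2 + 4 * s' -> s = s') by (intros; lra).
    assert (D1 := der_aff (-2) 4 (/2)).
    assert (D2 := der_uu_aff 1 (-2) (/2)).
    assert (D3 := der_uu_aff (-1) 2 (/2)).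
    assert (HP : 0 < Hs' (/2 + 1 * (-2 + 4 * /2))) by (apply Hs'_pos; lra).
    split; [|split; [|split; [|split; [|split; [|split; [|split; [|split; [|split; [|split;
      [|split; [|split; [|split; [|split; [|split; [|split]]]]]]]]]]]]]]].
    + split.
      * intros s _. split; [apply aff_cont|apply uu_aff_cont].
      * intros s s' _ _ E. injection E; intros; apply Inj; auto.
    + split.
      * intros s _. split; [apply aff_cont|apply uu_aff_cont].
      * intros s s' _ _ E. injection E; intros; apply Inj; auto.
    + rewrite uu_m2. f_equal; ring.
    + rewrite uu_p2. f_equal; ring.
    + rewrite uu_m2. f_equal; ring.
    + rewrite uu_p2. f_equal; ring.
    + lra.
    + lra.
    + rewrite uu_0. f_equal; field.
    + rewrite uu_0. f_equal; field.
    + intros p [s [Hs E1]] [s' [Hs' E2]]. subst p. injection E2; intros E3 E4.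
      assert (s = s') by (apply Inj; auto). subst s'.
      assert (uu (-2 + 4 * s) = /2) by lra.
      apply uu_half_inj in H. rewrite H. f_equal. rewrite <- H.
      replace (-2 + 4 * s) with 0 in * by lra. 
      assert (uu 0 = /2) by (rewrite <- uu_0; f_equal; field). rewrite H0. field.
    + exists 4. exact D1.
    + eexists. exact D2.
    + exists 4. exact D1.
    + eexists. exact D3.
    + match goal with |- Derive ?f ?x * Derive ?g _ - Derive ?h _ * Derive ?k _ <> 0 =>
        rewrite (is_derive_unique f x _ D1), (is_derive_unique g x _ D3),
                (is_derive_unique h x _ D2), (is_derive_unique k x _ D1) end.
      intros E. nra.
    + intros p. split.
      * intros [Hb Hz]. destruct p as [x y]. simpl in Hb, Hz. unfold Fd in Hz.
        change (FF d 0 x y = 0) in Hz. apply zero_iffV in Hz; auto. rewrite V0 in Hz.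
        destruct Hb as [Hx Hy].
        assert (Es : -2 + 4 * ((x + 2) / 4) = x) by field.
        assert (Hc : y = 1 + -2 * uu x \/ y = -1 + 2 * uu x).
        { assert ((y - (1 + -2 * uu x)) * (y + (1 + -2 * uu x)) = 0) by nra.
          apply Rmult_integral in H. destruct H; [left|right]; lra. }
        destruct Hc as [Ey|Ey]; [left|right]; exists ((x + 2) / 4);
          (split; [lra|]); rewrite Es; rewrite Ey; reflexivity.
      * intros Hon. destruct p as [x y].
        assert (Hs : exists s, 0 <= s <= 1 /\ x = -2 + 4 * s /\ (y = 1 + -2 * uu x \/ y = -1 + 2 * uu x)).
        { destruct Hon as [[s [Hs E]]|[s [Hs E]]]; injection E; intros; subst; exists s; auto. }
        destruct Hs as [s [Hs [Ex Ey]]].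
        pose proof (uu_range x).
        split.
        -- simpl. split; [lra| destruct Ey as [Ey|Ey]; rewrite Ey; lra].
        -- simpl. unfold Fd. change (FF d 0 x y = 0). apply zero_iffV; auto.
           rewrite V0. destruct Ey; subst y; ring.
  - unfold quadratic_at. simpl. split; [|split].
    + rewrite dx1_axis by (try rewrite Rabs_R0; lra).
      replace (uu 0) with (/2) by (rewrite <- uu_0; f_equal; field). field.
    + rewrite dx3_inner by (rewrite Rabs_R0; lra). ring.
    + intros [_ [_ [_ E]]]. revert E. unfold dx3 at 1.
      rewrite (Derive_ext_loc _ (fun z => ww d 0 0 * (2 * z))).
      * rewrite ww_d by (try rewrite Rabs_R0; lra).
        assert (DD : is_derive (fun z : R => d * (2 * z)) 0 (d * 2)) by (auto_derive; auto; ring).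
        match goal with |- Derive ?f ?x = 0 -> False => rewrite (is_derive_unique f x (d*2) DD) end. lra.
      * apply (loc_lt 0 _ (-1) 1); [lra|]. intros z Hz. apply dx3_inner.
        apply Rabs_lt_between; lra.
  - intros [x y] [Hb Hz] Hne. simpl in Hb, Hz. unfold Fd in Hz.
    change (FF d 0 x y = 0) in Hz. apply zero_iffV in Hz; auto.
    pose proof (V_le1 0 x Ht').
    assert (Hy : Rabs y < 1 + d).
    { destruct (Rle_dec 0 y); [rewrite Rabs_right by lra| rewrite Rabs_left by lra]; nra. }
    destruct (Req_dec y 0) as [Y|Y].
    + exfalso. apply Hne. subst y. rewrite V0 in Hz.
      assert (uu x = /2) by nra. apply uu_half_inj in H0. subst; reflexivity.
    + apply order_one_y; auto.
Qed.

Lemma cont_dom (f g : R -> R) s0 :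
  (forall s, Rabs (f s - f s0) <= Rabs (g s - g s0)) -> continuous g s0 -> continuous f s0.
Proof.
  intros Hdom Hg. apply continuity_pt_filterlim. apply continuity_pt_filterlim in Hg.
  unfold continuity_pt, continue_in, limit1_in, limit_in in *. simpl in *.
  intros eps Heps. destruct (Hg eps Heps) as [a [Ha Hx]]. exists a; split; auto.
  intros x Hx'. specialize (Hx x Hx'). unfold R_dist in *. specialize (Hdom x). lra.
Qed.

Lemma cont_aff_of (f : R -> R) a b s : continuous f s -> continuous (fun r => a + b * f r) s.
Proof.
  intros Hf.
  apply (continuous_plus (fun _ => a) (fun r => b * f r)).
  - apply continuous_const.
  - apply (continuous_mult (fun _ => b) f). apply continuous_const. auto.
Qed.

Lemma V_cont t x : continuous (V t) x.
Proof.
  apply (continuous_ext (fun r => eval (eV (lam t) (EV 0)) r 0 0)).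
  { intros; reflexivity. }
  apply cont1, wf_eV. wfauto.
Qed.

Lemma uu_neg x : uu (- x) = 1 - uu x.
Proof. unfold uu. rewrite <- H_sym. f_equal. field. Qed.

Lemma V_sym t x : V t (- x) = V t x.
Proof. unfold V, QQ, qq. rewrite uu_neg. ring. Qed.

Lemma lam_pos t : 0 < t <= 1 -> lam t = 1 + t.
Proof. intros. unfold lam. rewrite H_1 by lra. ring. Qed.

Lemma case_pos_order t : 0 < t <= 1 ->
  forall p, zero_set (Fd d t) p -> order_one_at (Fd d t) p.
Proof.
  intros Ht [x y] [Hb Hz]. simpl in Hb, Hz. unfold Fd in Hz.
  assert (Ht' : -1 <= t <= 1) by lra.
  change (FF d t x y = 0) in Hz. apply zero_iffV in Hz; auto.
  pose proof (V_le1 t x Ht').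
  assert (Hy : Rabs y < 1 + d).
  { destruct (Rle_dec 0 y); [rewrite Rabs_right by lra| rewrite Rabs_left by lra]; nra. }
  destruct (Req_dec y 0) as [Y|Y]; [|apply order_one_y; auto].
  subst y. unfold V, QQ, qq in Hz. rewrite lam_pos in Hz by auto.
  pose proof (uu_range x) as Hu.
  assert (Hx : Rabs x < /2).
  { apply Rabs_lt_between. unfold uu in Hz, Hu.
    destruct (Rle_dec (/2 + 1 * x) 0). { rewrite H_0 in Hz by auto. lra. }
    destruct (Rle_dec 1 (/2 + 1 * x)). { rewrite H_1 in Hz by auto. lra. }
    lra. }
  assert (Hu2 : uu x <> /2).
  { intros E. rewrite E in Hz. lra. }
  intros E. unfold order_one_at in E. simpl in E. injection E; intros _ E1.
  rewrite dx1_axis in E1 by (auto; lra). rewrite lam_pos in E1 by auto.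
  assert (0 < Hs' (/2 + 1 * x)) by (apply Hs'_pos; apply Rabs_lt_between in Hx; lra).
  assert (1 + -2 * uu x <> 0) by (intros HH; apply Hu2; lra).
  assert (0 < d * (1 + t)) by nra.
  apply Rmult_integral in E1. destruct E1 as [E1|E1]; [lra|].
  apply Rmult_integral in E1. destruct E1 as [E1|E1]; [lra|].
  apply Rmult_integral in E1. destruct E1 as [E1|E1]; [lra|].
  apply Rmult_integral in E1. destruct E1 as [E1|E1]; lra.
Qed.

Section PosT.
Variable t : R.
Hypothesis Ht : 0 < t <= 1.
Definition sl := sqrt (1 - / (1 + t)).
Definition u0 := (1 - sl) / 2.

Lemma sl_sq : sl * sl = 1 - / (1 + t).
Proof.
  unfold sl. apply sqrt_sqrt.
  assert (/ (1 + t) < 1) by (apply (Rmult_lt_reg_l (1+t)); [lra|]; rewrite Rinv_r; lra).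
  assert (0 < / (1 + t)) by (apply Rinv_0_lt_compat; lra). lra.
Qed.

Lemma sl_range : 0 < sl < 1.
Proof.
  assert (Hi1 : / (1 + t) < 1) by (apply (Rmult_lt_reg_l (1+t)); [lra|]; rewrite Rinv_r; lra).
  assert (Hi0 : 0 < / (1 + t)) by (apply Rinv_0_lt_compat; lra).
  pose proof sl_sq. assert (0 <= sl) by apply sqrt_pos.
  split.
  - destruct (Req_dec sl 0) as [E|E]; [rewrite E in H; lra| lra].
  - nra.
Qed.

Lemma u0_range : 0 < u0 < /2.
Proof. unfold u0. pose proof sl_range. lra. Qed.

Lemma Vfact x : V t x = 4 * (1 + t) * ((uu x - u0) * (uu x - (1 - u0))).
Proof.
  unfold V, QQ, qq. rewrite lam_pos by auto.
  assert (K : 4 * (1 + t) * (u0 * (1 - u0)) = 1).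
  { unfold u0. replace ((1 - sl) / 2 * (1 - (1 - sl) / 2)) with ((1 - sl * sl) / 4) by field.
    rewrite sl_sq. field. lra. }
  replace (4 * (1 + t) * ((uu x - u0) * (uu x - (1 - u0))))
    with (4 * (1 + t) * (uu x * uu x - uu x) + 4 * (1 + t) * (u0 * (1 - u0))) by ring.
  rewrite K. ring.
Qed.

Variable xL : R.
Hypothesis HxL : -/2 < xL < 0.
Hypothesis HuL : uu xL = u0.

Lemma uu_lt x : x < xL -> uu x < u0.
Proof.
  intros Hx. rewrite <- HuL. unfold uu.
  destruct (Rle_dec (/2 + 1 * x) 0).
  - rewrite H_0 by auto. pose proof u0_range. rewrite <- HuL in H. unfold uu in H. lra.
  - apply H_strict; lra.
Qed.

Lemma uu_gt x : xL < x -> u0 < uu x.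
Proof.
  intros Hx. rewrite <- HuL. unfold uu.
  destruct (Rle_dec 1 (/2 + 1 * x)).
  - rewrite (H_1 (/2 + 1 * x)) by auto. pose proof u0_range. rewrite <- HuL in H. unfold uu in H. lra.
  - apply H_strict; lra.
Qed.

Lemma V_pos_left x : x < xL -> 0 < V t x.
Proof.
  intros Hx. rewrite Vfact. pose proof (uu_lt x Hx). pose proof u0_range.
  apply Rmult_lt_0_compat; [lra|]. nra.
Qed.

Lemma V_nonneg_left x : x <= xL -> 0 <= V t x.
Proof.
  intros Hx. destruct (Req_dec x xL).
  - subst. rewrite Vfact, HuL. right. ring.
  - left. apply V_pos_left. lra.
Qed.

Lemma V_xL : V t xL = 0.
Proof. rewrite Vfact, HuL. ring. Qed.

Lemma V_neg_mid x : xL < x < - xL -> V t x < 0.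
Proof.
  intros Hx. rewrite Vfact.
  pose proof (uu_gt x ltac:(lra)). pose proof (uu_gt (-x) ltac:(lra)).
  rewrite uu_neg in H0. pose proof u0_range.
  assert (0 < 4 * (1 + t)) by lra.
  assert ((uu x - u0) * (uu x - (1 - u0)) < 0) by nra. nra.
Qed.

Definition xl s := xL + - (xL + 2) * Rabs (-1 + 2 * s).
Definition yl s := if Rle_dec s (/2) then sqrt (V t (xl s)) else - sqrt (V t (xl s)).

Lemma xl_cont s : continuous xl s.
Proof. apply cont_aff_of. apply continuous_Rabs_comp. apply aff_cont. Qed.

Lemma xl_le s : xl s <= xL.
Proof. unfold xl. pose proof (Rabs_pos (-1 + 2 * s)). nra. Qed.

Lemma xl_lt s : s <> /2 -> xl s < xL.
Proof.
  intros Hs. unfold xl. assert (0 < Rabs (-1 + 2 * s)) by (apply Rabs_pos_lt; lra). nra.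
Qed.

Lemma xl_ge s : 0 <= s <= 1 -> -2 <= xl s.
Proof.
  intros Hs. unfold xl. assert (Rabs (-1 + 2 * s) <= 1) by (apply Rabs_le_between; lra). nra.
Qed.

Lemma sqrtV_cont s : continuous (fun r => sqrt (V t (xl r))) s.
Proof. apply continuous_sqrt_comp. apply (continuous_comp xl (V t)). apply xl_cont. apply V_cont. Qed.

Lemma yl_cont s : continuous yl s.
Proof.
  destruct (Rtotal_order s (/2)) as [Hs|[Hs|Hs]].
  - apply (continuous_ext_loc _ (fun r => sqrt (V t (xl r)))).
    + apply (loc_lt s _ (s - 1) (/2)); [lra|]. intros y Hy. unfold yl.
      destruct (Rle_dec y (/2)); [reflexivity|lra].
    + apply sqrtV_cont.
  - subst s. apply (cont_dom yl (fun r => sqrt (V t (xl r)))).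
    + intros r. assert (E : yl (/2) = 0).
      { unfold yl. destruct (Rle_dec (/2) (/2)); [|lra].
        replace (xl (/2)) with xL by (unfold xl; replace (-1 + 2 * /2) with 0 by field; rewrite Rabs_R0; ring).
        rewrite V_xL. apply sqrt_0. }
      replace (sqrt (V t (xl (/2)))) with 0.
      2:{ replace (xl (/2)) with xL by (unfold xl; replace (-1 + 2 * /2) with 0 by field; rewrite Rabs_R0; ring).
          rewrite V_xL. symmetry. apply sqrt_0. }
      rewrite E. unfold yl. destruct (Rle_dec r (/2)); rewrite !Rminus_0_r; [right; reflexivity|].
      rewrite Rabs_Ropp. right; reflexivity.
    + apply sqrtV_cont.
  - apply (continuous_ext_loc _ (fun r => - sqrt (V t (xl r)))).
    + apply (loc_lt s _ (/2) (s + 1)); [lra|]. intros y Hy. unfold yl.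
      destruct (Rle_dec y (/2)); [lra|reflexivity].
    + apply (continuous_opp (fun r => sqrt (V t (xl r)))). apply sqrtV_cont.
Qed.

Lemma yl_sq s : yl s * yl s = V t (xl s).
Proof.
  pose proof (V_nonneg_left (xl s) (xl_le s)).
  unfold yl. destruct (Rle_dec s (/2)).
  - apply sqrt_sqrt; auto.
  - replace (- sqrt (V t (xl s)) * - sqrt (V t (xl s))) with (sqrt (V t (xl s)) * sqrt (V t (xl s))) by ring.
    apply sqrt_sqrt; auto.
Qed.

Lemma yl_bound s : -1 <= yl s <= 1.
Proof.
  assert (Ht' : -1 <= t <= 1) by lra.
  pose proof (V_le1 t (xl s) Ht'). pose proof (sqrt_le1 _ H). pose proof (sqrt_pos (V t (xl s))).
  unfold yl. destruct (Rle_dec s (/2)); lra.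
Qed.

Lemma gl_inj s s' : xl s = xl s' -> yl s = yl s' -> s = s'.
Proof.
  intros Ex Ey.
  assert (Ea : Rabs (-1 + 2 * s) = Rabs (-1 + 2 * s')).
  { unfold xl in Ex. apply (Rmult_eq_reg_l (- (xL + 2))); lra. }
  destruct (Req_dec s s') as [|Hne]; auto. exfalso.
  assert (Hs : s <> /2).
  { intros E. subst s. replace (-1 + 2 * /2) with 0 in Ea by field. rewrite Rabs_R0 in Ea.
    symmetry in Ea. apply Rabs_eq_0 in Ea. apply Hne. lra. }
  assert (Hop : -1 + 2 * s = - (-1 + 2 * s')).
  { destruct (Rcase_abs (-1 + 2 * s)) as [A|A]; destruct (Rcase_abs (-1 + 2 * s')) as [B|B].
    - rewrite (Rabs_left _ A), (Rabs_left _ B) in Ea. lra.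
    - rewrite (Rabs_left _ A), (Rabs_right _ B) in Ea. lra.
    - rewrite (Rabs_right _ A), (Rabs_left _ B) in Ea. lra.
    - rewrite (Rabs_right _ A), (Rabs_right _ B) in Ea. lra. }
  pose proof (xl_lt s Hs) as Hlt. pose proof (V_pos_left _ Hlt) as Vp.
  pose proof (sqrt_lt_R0 _ Vp) as Sp.
  unfold yl in Ey. rewrite <- Ex in Ey.
  destruct (Rle_dec s (/2)); destruct (Rle_dec s' (/2)); lra.
Qed.

Lemma on_left x y : -2 <= x <= xL -> y * y = V t x ->
  exists s, 0 <= s <= 1 /\ (xl s, yl s) = (x, y).
Proof.
  intros Hx Hy.
  set (r := (xL - x) / (xL + 2)).
  assert (Hr : 0 <= r <= 1).
  { unfold r. split.
    - apply Rdiv_le_0_compat; lra.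
    - apply (Rmult_le_reg_r (xL + 2)); [lra|]. unfold Rdiv. rewrite Rmult_assoc, Rinv_l; lra. }
  assert (Hxr : xL + - (xL + 2) * r = x) by (unfold r; field; lra).
  destruct (Rle_dec 0 y) as [Y|Y].
  - exists ((1 - r) / 2). split; [lra|].
    assert (Ex : xl ((1 - r) / 2) = x).
    { unfold xl. replace (-1 + 2 * ((1 - r) / 2)) with (- r) by field.
      rewrite Rabs_Ropp, Rabs_right by lra. auto. }
    unfold yl. rewrite Ex. destruct (Rle_dec ((1 - r) / 2) (/2)); [|lra].
    f_equal. rewrite <- Hy. rewrite sqrt_square; auto.
  - assert (Hr0 : 0 < r).
    { destruct (Req_dec r 0) as [E|E]; [|lra]. exfalso.
      assert (Hxx : x = xL) by (rewrite E in Hxr; lra). rewrite Hxx, V_xL in Hy. nra. }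
    exists ((1 + r) / 2). split; [lra|].
    assert (Ex : xl ((1 + r) / 2) = x).
    { unfold xl. replace (-1 + 2 * ((1 + r) / 2)) with r by field.
      rewrite Rabs_right by lra. auto. }
    unfold yl. rewrite Ex. destruct (Rle_dec ((1 + r) / 2) (/2)); [lra|].
    f_equal. rewrite <- Hy. replace (y * y) with ((- y) * (- y)) by ring.
    rewrite sqrt_square by lra. ring.
Qed.

Lemma case_pos_arcs :
  two_disjoint_arcs (zero_set (Fd d t)) (-2, 1) (-2, -1) (2, 1) (2, -1).
Proof.
  assert (Ht' : -1 <= t <= 1) by lra.
  assert (X0 : xl 0 = -2).
  { unfold xl. replace (-1 + 2 * 0) with (-1) by ring. rewrite Rabs_left by lra. ring. }
  assert (X1 : xl 1 = -2).
  { unfold xl. replace (-1 + 2 * 1) with 1 by ring. rewrite Rabs_right by lra. ring. }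
  assert (Vm2 : V t (-2) = 1) by (apply V_far; rewrite Rabs_left; lra).
  assert (Y0 : yl 0 = 1).
  { unfold yl. destruct (Rle_dec 0 (/2)); [|lra]. rewrite X0, Vm2. apply sqrt_1. }
  assert (Y1 : yl 1 = -1).
  { unfold yl. destruct (Rle_dec 1 (/2)); [lra|]. rewrite X1, Vm2, sqrt_1. ring. }
  exists (fun s => (xl s, yl s)), (fun s => (- xl s, yl s)).
  split; [|split; [|split; [|split; [|split; [|split; [|split]]]]]].
  - split.
    + intros s _. split; [apply xl_cont|apply yl_cont].
    + intros s s' _ _ E. injection E; intros. apply gl_inj; auto.
  - split.
    + intros s _. split; [apply (continuous_opp xl), xl_cont|apply yl_cont].
    + intros s s' _ _ E. injection E; intros. apply gl_inj; auto. lra.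
  - rewrite X0, Y0. reflexivity.
  - rewrite X1, Y1. reflexivity.
  - rewrite X0, Y0. f_equal. ring.
  - rewrite X1, Y1. f_equal. ring.
  - intros p [[s [Hs E1]] [s' [Hs' E2]]]. subst p. injection E2; intros E3 E4.
    pose proof (xl_le s). pose proof (xl_le s'). lra.
  - intros p. split.
    + intros [Hb Hz]. destruct p as [x y]. simpl in Hb, Hz. unfold Fd in Hz.
      change (FF d t x y = 0) in Hz. apply zero_iffV in Hz; auto.
      destruct Hb as [Hx Hy].
      destruct (Rle_dec x xL) as [L|L].
      * left. destruct (on_left x y ltac:(lra) Hz) as [s [Hs E]]. exists s; auto.
      * destruct (Rle_dec (- xL) x) as [R|R].
        -- right. rewrite <- V_sym in Hz.
           destruct (on_left (- x) y ltac:(lra) Hz) as [s [Hs E]]. exists s; split; auto.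
           injection E; intros E1 E2. rewrite E1, E2. f_equal. ring.
        -- exfalso. pose proof (V_neg_mid x ltac:(lra)). nra.
    + intros Hon. destruct p as [x y].
      assert (Hs : exists s, 0 <= s <= 1 /\ (x = xl s \/ x = - xl s) /\ y = yl s).
      { destruct Hon as [[s [Hs E]]|[s [Hs E]]]; injection E; intros; subst; exists s; auto. }
      destruct Hs as [s [Hs [Ex Ey]]].
      pose proof (xl_ge s Hs). pose proof (xl_le s). pose proof (yl_bound s).
      split.
      * simpl. split; [destruct Ex; subst x; lra| subst y; lra].
      * simpl. unfold Fd. change (FF d t x y = 0). apply zero_iffV; auto.
        subst y. rewrite yl_sq. destruct Ex; subst x; [|rewrite V_sym]; reflexivity.
Qed.
End PosT.

Lemma xL_exists t : 0 < t <= 1 -> exists xL, -/2 < xL < 0 /\ uu xL = u0 t.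
Proof.
  intros Ht. pose proof (u0_range t Ht) as Hu.
  assert (Hc : continuity Hs) by (intros x; apply continuity_pt_filterlim, H_cont).
  destruct (IVT_gen Hs 0 (/2) (u0 t) Hc) as [y [Hy E]].
  { rewrite H_0 by lra. rewrite H_half. rewrite Rmin_left, Rmax_right by lra. lra. }
  rewrite Rmin_left, Rmax_right in Hy by lra.
  exists (y - /2). split.
  - split.
    + destruct (Req_dec y 0) as [Y|Y]; [|lra]. subst. rewrite H_0 in E by lra. lra.
    + destruct (Req_dec y (/2)) as [Y|Y]; [|lra]. subst. rewrite H_half in E. lra.
  - unfold uu. replace (/2 + 1 * (y - /2)) with y by ring. auto.
Qed.

Lemma case_pos t : 0 < t <= 1 ->
  two_disjoint_arcs (zero_set (Fd d t)) (-2, 1) (-2, -1) (2, 1) (2, -1) /\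
  (forall p, zero_set (Fd d t) p -> order_one_at (Fd d t) p).
Proof.
  intros Ht. split.
  - destruct (xL_exists t Ht) as [xL [HxL HuL]]. apply (case_pos_arcs t Ht xL HxL HuL).
  - apply case_pos_order; auto.
Qed.

Definition bbd x := 2 * Hs' (2 + 2 * x) * Hs (2 + -2 * x) + Hs (2 + 2 * x) * (-2 * Hs' (2 + -2 * x)).
Definition PPd t x := (/4 - d) * (nu t * bbd x).
Definition QQd t x := lam t * (4 * (Hs' (/2 + 1 * x) * (1 + -2 * uu x))).
Definition ccd y := - / d * Hs' ((1 + 2 * d) / d + - / d * y) * Hs ((1 + 2 * d) / d + / d * y)
                   + Hs ((1 + 2 * d) / d + - / d * y) * (/ d * Hs' ((1 + 2 * d) / d + / d * y)).

Lemma dx1_formula t x y : dx1 (Fd d t) x y =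
  (y * y + -1) * (-1 * (PPd t x * cc d y)) + (-1 * PPd t x * QQ t x + ww d t x * QQd t x) * cc d y.
Proof.
  unfold dx1. apply is_derive_unique. unfold Fd.
  change (is_derive (fun z => FF d t z y) x
    ((y * y + -1) * (-1 * (PPd t x * cc d y)) + (-1 * PPd t x * QQ t x + ww d t x * QQd t x) * cc d y)).
  unfold FF, ww, PP, QQ, qq, uu, bb, PPd, QQd, bbd, uu.
  auto_derive.
  - repeat split; apply H_exd.
  - unfold Hs'. change (Derive (fun x0 : R => Hs x0)) with (Derive Hs). ring.
Qed.

Lemma dx3_formula t x y : dx3 (Fd d t) x y =
  2 * y * (/4 + -1 * (PP d t x * cc d y)) + (y * y + -1) * (-1 * (PP d t x * ccd y))
  + ww d t x * QQ t x * ccd y.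
Proof.
  unfold dx3. apply is_derive_unique. unfold Fd.
  change (is_derive (fun z => FF d t x z) y
    (2 * y * (/4 + -1 * (PP d t x * cc d y)) + (y * y + -1) * (-1 * (PP d t x * ccd y))
     + ww d t x * QQ t x * ccd y)).
  unfold FF, cc, ccd.
  auto_derive.
  - repeat split; apply H_exd.
  - unfold Hs'. change (Derive (fun x0 : R => Hs x0)) with (Derive Hs). ring.
Qed.

Lemma RmL a b A B : Rabs a <= A -> Rabs b <= B -> Rabs (a * b) <= A * B.
Proof. intros. rewrite Rabs_mult. apply Rmult_le_compat; auto using Rabs_pos. Qed.

Lemma RaL a b A B : Rabs a <= A -> Rabs b <= B -> Rabs (a + b) <= A + B.
Proof. intros. eapply Rle_trans; [apply Rabs_triang|]. lra. Qed.

Lemma Rab01 a : 0 <= a <= 1 -> Rabs a <= 1.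
Proof. intros; rewrite Rabs_right; lra. Qed.

Lemma Rabs_m1 : Rabs (-1) <= 1.
Proof. rewrite Rabs_left by lra. lra. Qed.

Lemma WQ_bound t x : -1 <= t <= 1 -> 0 <= ww d t x * QQ t x <= 2 * d.
Proof.
  intros Ht. pose proof (ww_range t x). pose proof (QQ_range t x Ht).
  destruct (Req_dec (QQ t x) 0) as [E|E].
  { rewrite E. lra. }
  assert (Ht2 : -/2 <= t).
  { destruct (Rle_dec (-/2) t); auto. exfalso. apply E. unfold QQ, lam. rewrite H_0 by lra. ring. }
  assert (Hx : Rabs x <= /2).
  { apply Rabs_le_between. destruct (Rle_dec (-/2) x); [destruct (Rle_dec x (/2))|].
    - lra.
    - exfalso. apply E. unfold QQ, qq, uu. rewrite H_1 by lra. ring.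
    - exfalso. apply E. unfold QQ, qq, uu. rewrite H_0 by lra. ring. }
  rewrite ww_d by auto. split; nra.
Qed.

Lemma case_neg_order t : -1 <= t < 0 ->
  forall p, zero_set (Fd d t) p -> order_one_at (Fd d t) p.
Proof.
  intros Ht [x y] [Hb Hz]. simpl in Hb, Hz. unfold Fd in Hz.
  assert (Ht' : -1 <= t <= 1) by lra.
  change (FF d t x y = 0) in Hz. apply zero_iffV in Hz; auto.
  pose proof (V_le1 t x Ht'). pose proof (V_pos_neg t x Ht).
  assert (Hy : Rabs y < 1 + d).
  { destruct (Rle_dec 0 y); [rewrite Rabs_right by lra| rewrite Rabs_left by lra]; nra. }
  apply order_one_y; auto. intros Y. subst y. lra.
Qed.

Variable K : R.
Hypothesis HK0 : 0 <= K.
Hypothesis HK : forall x, Rabs (Hs' x) <= K.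

Lemma ccd_bound y : Rabs (ccd y) <= 2 * K / d.
Proof.
  unfold ccd.
  assert (Hi : Rabs (/ d) = / d) by (rewrite Rabs_right; [auto|left; apply Rinv_0_lt_compat; lra]).
  replace (2 * K / d) with (/ d * K * 1 + 1 * (/ d * K)) by (field; lra).
  apply RaL.
  - apply RmL; [apply RmL|apply Rab01, H_range]; [rewrite Rabs_Ropp, Hi; lra|apply HK].
  - apply RmL; [apply Rab01, H_range|apply RmL; [rewrite Hi; lra|apply HK]].
Qed.

Lemma ccd_zero y : Rabs y < 1 + d \/ 1 + 2 * d < Rabs y -> ccd y = 0.
Proof.
  intros [Hy|Hy]; unfold ccd.
  - apply Rabs_lt_between in Hy.
    rewrite !Hs'_zero. ring.
    + right. apply (Rmult_lt_reg_l d); [lra|]. field_simplify; lra.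
    + right. apply (Rmult_lt_reg_l d); [lra|]. field_simplify; lra.
  - destruct (Rle_dec 0 y).
    + rewrite Rabs_right in Hy by lra.
      assert (N : (1 + 2 * d) / d + - / d * y < 0).
      { apply (Rmult_lt_reg_l d); [lra|]. field_simplify; lra. }
      rewrite (Hs'_zero ((1 + 2 * d) / d + - / d * y)) by auto. rewrite (H_0 _ (Rlt_le _ _ N)). ring.
    + rewrite Rabs_left in Hy by lra.
      assert (N : (1 + 2 * d) / d + / d * y < 0).
      { apply (Rmult_lt_reg_l d); [lra|]. field_simplify; lra. }
      rewrite (Hs'_zero ((1 + 2 * d) / d + / d * y)) by auto. rewrite (H_0 _ (Rlt_le _ _ N)). ring.
Qed.

Lemma term2 y : Rabs y <= 2 -> Rabs ((y * y + -1) * ccd y) <= 10 * K.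
Proof.
  intros Hy.
  destruct (Rlt_dec (Rabs y) (1 + d)) as [A|A].
  { rewrite ccd_zero by auto. rewrite Rmult_0_r, Rabs_R0. lra. }
  destruct (Rlt_dec (1 + 2 * d) (Rabs y)) as [B|B].
  { rewrite ccd_zero by auto. rewrite Rmult_0_r, Rabs_R0. lra. }
  assert (Y : Rabs (y * y + -1) <= 5 * d).
  { assert (Hy2 : y * y = Rabs y * Rabs y) by (rewrite <- Rabs_mult, Rabs_right; [ring|]; apply Rle_ge, Rle_0_sqr).
    rewrite Hy2. rewrite Rabs_right; nra. }
  replace (10 * K) with (5 * d * (2 * K / d)) by (field; lra).
  apply RmL; auto. apply ccd_bound.
Qed.

Lemma F_bounds t x y : -1 <= t <= 1 -> in_box 2 x y ->
  Rabs (FF d t x y) <= 2 + 10 * K /\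
  Rabs (dx1 (Fd d t) x y) <= 2 + 10 * K /\
  Rabs (dx3 (Fd d t) x y) <= 2 + 10 * K.
Proof.
  intros Ht [Hx Hy].
  assert (Ay : Rabs y <= 2) by (apply Rabs_le_between; lra).
  assert (Y1 : Rabs (y * y + -1) <= 3) by (apply Rabs_le_between; nra).
  pose proof (PP_range t x) as HP. pose proof (cc_range d y) as HC.
  pose proof (WQ_bound t x Ht) as HW. pose proof (ww_range t x) as Hw.
  pose proof (QQ_range t x Ht) as HQ.
  assert (Pc : Rabs (/4 + -1 * (PP d t x * cc d y)) <= /4).
  { apply Rabs_le_between. nra. }
  split; [|split].
  - unfold FF. replace (2 + 10 * K) with (3 * /4 + (2 * d * 1 + (2 + 10 * K - 3 * /4 - 2 * d))) by ring.
    eapply Rle_trans; [apply RaL; [apply RmL; eauto|apply RmL; [apply Rab01; lra|apply Rab01; auto]]|].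
    lra.
  - rewrite dx1_formula.
    assert (Bb : Rabs (bbd x) <= 4 * K).
    { unfold bbd. replace (4 * K) with (2 * K * 1 + 1 * (2 * K)) by ring.
      apply RaL.
      + apply RmL; [|apply Rab01, H_range]. replace (2 * K) with (2 * K) by ring.
        rewrite Rabs_mult, (Rabs_right 2) by lra. pose proof (HK (2 + 2 * x)). lra.
      + apply RmL; [apply Rab01, H_range|]. rewrite Rabs_mult, Rabs_left by lra.
        pose proof (HK (2 + -2 * x)). lra. }
    assert (Pd : Rabs (PPd t x) <= K).
    { unfold PPd. replace K with (/4 * (1 * (4 * K))) by field.
      apply RmL; [rewrite Rabs_right; lra|]. apply RmL; auto. apply Rab01, nu_range. }
    assert (Qd : Rabs (QQd t x) <= 8 * K).
    { unfold QQd. replace (8 * K) with (2 * (4 * (K * 1))) by ring.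
      pose proof (lam_range t Ht). pose proof (uu_range x).
      apply RmL; [rewrite Rabs_right; lra|]. apply RmL; [rewrite Rabs_right; lra|].
      apply RmL; auto. apply Rabs_le_between; lra. }
    assert (T1 : Rabs ((y * y + -1) * (-1 * (PPd t x * cc d y))) <= 3 * K).
    { replace ((y * y + -1) * (-1 * (PPd t x * cc d y))) with (- (y * y + -1) * (PPd t x * cc d y)) by ring.
      replace (3 * K) with (3 * (K * 1)) by ring.
      apply RmL; [rewrite Rabs_Ropp; auto|]. apply RmL; auto. apply Rab01; auto. }
    assert (T2 : Rabs (-1 * PPd t x * QQ t x) <= K * 2).
    { replace (-1 * PPd t x * QQ t x) with (- PPd t x * QQ t x) by ring.
      apply RmL; [rewrite Rabs_Ropp; auto|]. rewrite Rabs_right; lra. }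
    assert (T3 : Rabs (ww d t x * QQd t x) <= /4 * (8 * K)).
    { apply RmL; auto. rewrite Rabs_right; lra. }
    assert (T4 : Rabs ((-1 * PPd t x * QQ t x + ww d t x * QQd t x) * cc d y) <= (K * 2 + /4 * (8 * K)) * 1).
    { apply RmL; [apply RaL; auto|apply Rab01; auto]. }
    eapply Rle_trans; [apply RaL; [exact T1|exact T4]|]. lra.
  - rewrite dx3_formula.
    replace (2 + 10 * K) with (4 * /4 + /4 * (10 * K) + 2 * d * (2 * K / d) + (1 + 10 * K - 10 * K / 4 - 4 * K)) by (field; lra).
    assert (0 <= 1 + 10 * K - 10 * K / 4 - 4 * K) by lra.
    assert (T2 : Rabs ((y * y + -1) * (-1 * (PP d t x * ccd y))) <= /4 * (10 * K)).
    { replace ((y * y + -1) * (-1 * (PP d t x * ccd y))) with (- PP d t x * ((y * y + -1) * ccd y)) by ring.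
      apply RmL; [rewrite Rabs_Ropp, Rabs_right; lra|]. apply term2; auto. }
    assert (T1 : Rabs (2 * y * (/4 + -1 * (PP d t x * cc d y))) <= 4 * /4).
    { apply RmL; auto. rewrite Rabs_mult, Rabs_right by lra. lra. }
    assert (T3 : Rabs (ww d t x * QQ t x * ccd y) <= 2 * d * (2 * K / d)).
    { apply RmL; [rewrite Rabs_right; lra|apply ccd_bound]. }
    eapply Rle_trans; [apply RaL; [apply RaL; eauto|eauto]|]. lra.
Qed.

End WithD.

Theorem mainTheorem8 :
  exists F : R -> R -> R -> R -> R,
    (forall delta, 0 < delta <= / 10 -> smooth3 (F delta)) /\
    (forall delta, 0 < delta <= / 10 ->
       forall x1 x3, in_box 2 x1 x3 -> F delta (-1) x1 x3 = f0 x1 x3) /\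
    (forall delta, 0 < delta <= / 10 ->
       forall t t' x1 x3, -1 <= t <= 1 -> -1 <= t' <= 1 ->
         in_box 2 x1 x3 -> ~ in_box (1 + 2 * delta) x1 x3 ->
         F delta t x1 x3 = F delta t' x1 x3) /\
    (forall delta t, 0 < delta <= / 10 -> -1 <= t < 0 ->
       two_disjoint_arcs (zero_set (F delta t)) (-2, 1) (2, 1) (-2, -1) (2, -1) /\
       (forall p, zero_set (F delta t) p -> order_one_at (F delta t) p)) /\
    (forall delta, 0 < delta <= / 10 ->
       exists c : R * R,
         letter_X (zero_set (F delta 0)) (-2, 1) (2, -1) (-2, -1) (2, 1) c /\
         quadratic_at (F delta 0) c /\
         (forall p, zero_set (F delta 0) p -> p <> c -> order_one_at (F delta 0) p)) /\
    (forall delta t, 0 < delta <= / 10 -> 0 < t <= 1 ->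
       two_disjoint_arcs (zero_set (F delta t)) (-2, 1) (-2, -1) (2, 1) (2, -1) /\
       (forall p, zero_set (F delta t) p -> order_one_at (F delta t) p)) /\
    (exists M : R, forall delta t x1 x3, 0 < delta <= / 10 -> -1 <= t <= 1 ->
       in_box 2 x1 x3 ->
       Rabs (F delta t x1 x3) <= M /\
       Rabs (dx1 (F delta t) x1 x3) <= M /\
       Rabs (dx3 (F delta t) x1 x3) <= M).
Proof.
  exists Fd.
  split; [|split; [|split; [|split; [|split; [|split]]]]].
  - intros d Hd. apply Fd_smooth.
  - intros d Hd x1 x3 _. rewrite Fd_FF. apply F_init.
  - intros d Hd t t' x1 x3 _ _ _ Hn. rewrite !Fd_FF. eapply F_indep; eauto.
  - intros d t Hd Ht. split; [eapply case_neg; eauto| eapply case_neg_order; eauto].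
  - intros d Hd. eapply case_zero; eauto.
  - intros d t Hd Ht. eapply case_pos; eauto.
  - destruct Hs'_bound as [K [HK0 HK]]. exists (2 + 10 * K).
    intros d t x1 x3 Hd Ht Hb. rewrite Fd_FF. eapply F_bounds; eauto.
Qed.
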